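(* Let $\gamma>0$, $C\ge1$, and let the rows $q_1,q_2,\ldots$ (row vectors in $\mathbb{R}^N$) of an $m\times N$ real matrix $Q$ arrive online. Suppose there is an online algorithm that outputs a sequence of positive semidefinite $N\times N$ matrices $X_0,X_1,X_2,\ldots$ which, at each time step $t\ge1$, either reports that there is no positive semidefinite matrix $X$ with $\mathrm{tr}(X)\le\gamma^2N$ and $X\succeq q_i^Tq_i$ for all $i\in[t]$, or else outputs a new positive semidefinite matrix $X_t$ such that $X_t\succeq X_{t-1}$, $X_t\succeq q_t^Tq_t$, and $\mathrm{tr}(X_t)\le C^2\gamma^2N$. Then there exists an online factorization algorithm that solves the $(\gamma,C)$-bounded online average factorization problem for $Q$.
   Context: $A\succeq B$ means $A-B$ is positive semidefinite. For a matrix, $\|L\|_{2\to\infty}$ is the maximum $\ell_2$ norm of a row, $\|R\|_{1\to2}$ the maximum $\ell_2$ norm of a column, $\|R\|_F$ the Frobenius norm, and $\gamma_2(A)=\min\{\|L\|_{2\to\infty}\|R\|_{1\to2}:LR=A\}$; $Q_t$ is the first $t$ rows of $Q$. The $(\gamma,C)$-bounded online average factorization problem: the algorithm chooses an initial (possibly empty) matrix $R_0$ with $N$ columns; at each time $t\ge1$ it receives $q_t$ and must either (i) form $R_t$ by appending rows to $R_{t-1}$ and output a row $\ell_t$ with $\ell_tR_t=q_t$, such that $\|R_t\|_F\le\sqrt N$ and $\|L_t\|_{2\to\infty}\le C\gamma$ (where $L_t$ has zero-padded rows $\ell_1,\ldots,\ell_t$), or (ii) (correctly) assert that $\gamma_2(Q_t)>\gamma$.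 *)

(* Defs.v *)
From HB Require Import structures.
From mathcomp Require Import all_boot all_order all_algebra.
Set Implicit Arguments. Unset Strict Implicit. Unset Printing Implicit Defensive.
Import Order.TTheory GRing.Theory Num.Theory.
Local Open Scope ring_scope.

Section Defs.
Variable R : rcfType.

Definition norm2inf m n (L : 'M[R]_(m, n)) : R :=
  \big[Num.max/0]_(i < m) Num.sqrt (\sum_(j < n) L i j ^+ 2).
Definition norm12 m n (M : 'M[R]_(m, n)) : R :=
  \big[Num.max/0]_(j < n) Num.sqrt (\sum_(i < m) M i j ^+ 2).
Definition frob m n (M : 'M[R]_(m, n)) : R :=
  Num.sqrt (\sum_(i < m) \sum_(j < n) M i j ^+ 2).

(* gamma_2(A) > g, where gamma_2(A) = min { ||L||_{2->oo} ||R||_{1->2} : L R = A }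
   (inner dimension k arbitrary): every factorization has value > g. *)
Definition gamma2_gt m n (A : 'M[R]_(m, n)) (g : R) : Prop :=
  forall (k : nat) (L : 'M[R]_(m, k)) (M : 'M[R]_(k, n)),
    L *m M = A -> g < norm2inf L * norm12 M.

Definition mx_of_rows N (s : seq 'rV[R]_N) : 'M[R]_(size s, N) :=
  \matrix_(i < size s, j < N) (nth 0 s i) 0 j.

Definition seqnorm (l : seq R) : R := Num.sqrt (\sum_(x <- l) x ^+ 2).
(* ||L||_{2->oo} of the (zero-padded) matrix with rows ls *)
Definition rows_norm2inf (ls : seq (seq R)) : R :=
  \big[Num.max/0]_(l <- ls) seqnorm l.

Definition psdmx N (A : 'M[R]_N) : Prop :=
  A^T = A /\ forall x : 'rV[R]_N, 0 <= (x *m A *m x^T) 0 0.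
Definition psd_ge N (A B : 'M[R]_N) : Prop := psdmx (A - B).

(* ---------- online PSD algorithm ----------
   X0 = initial output; step p = output after receiving the prefix p
   (p = q_1 ... q_t): None = "report infeasibility", Some X_t otherwise.
   The output depends only on the prefix seen so far (online). *)
Definition psd_alg N := ('M[R]_N * (seq 'rV[R]_N -> option 'M[R]_N))%type.

Fixpoint psd_run_aux N (step : seq 'rV[R]_N -> option 'M[R]_N)
    (done rest : seq 'rV[R]_N) (st : option 'M[R]_N) : option 'M[R]_N :=
  match rest with
  | [::] => st
  | q :: rest' =>
      let done' := rcons done q in
      psd_run_aux step done' rest'
        (match st with Some _ => step done' | None => None end)
  end.
Definition psd_run N (A : psd_alg N) (p : seq 'rV[R]_N) : option 'M[R]_N :=
  psd_run_aux A.2 [::] p (Some A.1).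

Definition psd_alg_correct N (gamma C : R) (A : psd_alg N) : Prop :=
  psdmx A.1 /\
  forall (p : seq 'rV[R]_N) (q : 'rV[R]_N) (Xp : 'M[R]_N),
    psd_run A p = Some Xp ->
    match A.2 (rcons p q) with
    | None => ~ (exists X : 'M[R]_N, psdmx X /\ \tr X <= gamma ^+ 2 * N%:R /\
                   forall qi, qi \in rcons p q -> psd_ge X (qi^T *m qi))
    | Some Xt => psdmx Xt /\ psd_ge Xt Xp /\ psd_ge Xt (q^T *m q) /\
                 \tr Xt <= C ^+ 2 * gamma ^+ 2 * N%:R
    end.

(* ---------- online factorization algorithm ----------
   F.1 = R_0 (as its list of rows); F.2 p, for the prefix p = q_1..q_t, is
   None = "assert gamma_2(Q_t) > gamma", or Some (rows appended to R_{t-1}, l_t)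
   where l_t is the list of coordinates of the row l_t (length = #rows of R_t). *)
Definition fact_alg N :=
  (seq 'rV[R]_N * (seq 'rV[R]_N -> option (seq 'rV[R]_N * seq R)))%type.

Fixpoint fact_run_aux N (step : seq 'rV[R]_N -> option (seq 'rV[R]_N * seq R))
    (done rest : seq 'rV[R]_N) (st : option (seq 'rV[R]_N * seq (seq R)))
    : option (seq 'rV[R]_N * seq (seq R)) :=
  match rest with
  | [::] => st
  | q :: rest' =>
      let done' := rcons done q in
      fact_run_aux step done' rest'
        (match st with
         | Some (Rs, Ls) =>
             match step done' with
             | Some (nw, l) => Some (Rs ++ nw, rcons Ls l)
             | None => None
             end
         | None => None
         end)
  end.
Definition fact_run N (F : fact_alg N) (p : seq 'rV[R]_N)
    : option (seq 'rV[R]_N * seq (seq R)) :=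
  fact_run_aux F.2 [::] p (Some (F.1, [::])).

Definition solves_online_avg_fact N (gamma C : R) (F : fact_alg N) : Prop :=
  forall (p : seq 'rV[R]_N) (q : 'rV[R]_N) Rs Ls,
    fact_run F p = Some (Rs, Ls) ->
    match F.2 (rcons p q) with
    | None => gamma2_gt (mx_of_rows (rcons p q)) gamma
    | Some (nw, l) =>
        let Rt := Rs ++ nw in
        size l = size Rt /\
        (\row_(i < size Rt) nth 0 l i) *m mx_of_rows Rt = q /\
        frob (mx_of_rows Rt) <= Num.sqrt N%:R /\
        rows_norm2inf (rcons Ls l) <= C * gamma
    end.

End Defs.

(* Main.v *)
Require Import Defs.
From HB Require Import structures.
From mathcomp Require Import all_boot all_order all_algebra.
Import Order.TTheory GRing.Theory Num.Theory.
Local Open Scope ring_scope.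
From Stdlib Require Classical_Prop IndefiniteDescription.
From mathcomp Require Import ring lra.
Set Implicit Arguments. Unset Strict Implicit. Unset Printing Implicit Defensive.

Section Alg.
Variable R : rcfType.

Definition bil n (x : 'rV[R]_n) (A : 'M[R]_n) (y : 'rV[R]_n) : R :=
  (x *m A *m y^T) 0 0.

Lemma bilDl n (x y z : 'rV[R]_n) A : bil (x + y) A z = bil x A z + bil y A z.
Proof. by rewrite /bil !mulmxDl mxE. Qed.
Lemma bilDr n (x y z : 'rV[R]_n) A : bil x A (y + z) = bil x A y + bil x A z.
Proof. by rewrite /bil linearD /= mulmxDr mxE. Qed.
Lemma bilZl n (x z : 'rV[R]_n) A c : bil (c *: x) A z = c * bil x A z.
Proof. by rewrite /bil -!scalemxAl mxE. Qed.
Lemma bilZr n (x z : 'rV[R]_n) A c : bil x A (c *: z) = c * bil x A z.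
Proof. by rewrite /bil linearZ /= -scalemxAr mxE. Qed.

Lemma mx11_mul m (u : 'M[R]_(1, m)) (v : 'M[R]_(m, 1)) :
  (u *m v) 0 0 = \sum_j u 0 j * v j 0.
Proof. by rewrite mxE. Qed.

Lemma dot_sym m (u x : 'M[R]_(1, m)) : (u *m x^T) 0 0 = (x *m u^T) 0 0.
Proof. by rewrite -[u *m x^T]trmxK trmx_mul trmxK mxE. Qed.

Lemma bil_sym n (x y : 'rV[R]_n) A : A^T = A -> bil x A y = bil y A x.
Proof.
move=> sA; have E : (x *m A *m y^T)^T = y *m A *m x^T.
  by rewrite !trmx_mul trmxK sA mulmxA.
by rewrite /bil -E [in RHS]mxE.
Qed.

Lemma psd_cs n (A : 'M[R]_n) x e : psdmx A ->
  bil x A e ^+ 2 <= bil x A x * bil e A e.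
Proof.
move=> [sA pA].
have E t : bil (x + t *: e) A (x + t *: e) =
   bil x A x + 2 * t * bil x A e + t ^+ 2 * bil e A e.
  rewrite !bilDl !bilDr !bilZl !bilZr (bil_sym e x sA); ring.
have a0 : 0 <= bil e A e by apply: pA.
have al0 : 0 <= bil x A x by apply: pA.
set a := bil e A e in E a0 *; set b := bil x A e in E *; set al := bil x A x in E al0 *.
have H t : 0 <= al + 2 * t * b + t ^+ 2 * a by rewrite -E; apply: pA.
have [a_gt0|] := ltrP 0 a.
  have := H (- (b / a)).
  have -> : al + 2 * - (b / a) * b + (- (b / a)) ^+ 2 * a = al - b ^+ 2 / a.
    by field; rewrite gt_eqF.
  rewrite subr_ge0 ler_pdivrMr //.
move=> a_le0; have a0' : a = 0 by apply/eqP; rewrite eq_le a_le0 a0.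
rewrite a0' mulr0.
have [b0|bn0] := eqVneq b 0; first by rewrite b0 expr0n.
have := H (- ((al + 1) / (2 * b))).
have -> : al + 2 * - ((al + 1) / (2 * b)) * b + (- ((al + 1) / (2 * b))) ^+ 2 * a = -1.
  by rewrite a0' mulr0 addr0; field.
by rewrite lerNr oppr0 ler10.
Qed.


Definition gram n (s : seq 'rV[R]_n) : 'M[R]_n := \sum_(r <- s) r^T *m r.

Lemma bil_delta n (A : 'M[R]_n) i j :
  bil (delta_mx 0 i) A (delta_mx 0 j) = A i j.
Proof. by rewrite /bil -rowE trmx_delta -colE !mxE. Qed.

Lemma bilB n (x : 'rV[R]_n) A B : bil x (A - B) x = bil x A x - bil x B x.
Proof. by rewrite /bil mulmxBr mulmxBl !mxE. Qed.

Lemma bil_rank1 n (x r : 'rV[R]_n) : bil x (r^T *m r) x = ((x *m r^T) 0 0) ^+ 2.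
Proof.
rewrite /bil !mulmxA -(mulmxA (x *m r^T)) mx11_mul big_ord1 expr2.
by rewrite -[in X in _ * X = _]dot_sym.
Qed.

Lemma rank1E n (r : 'rV[R]_n) j k : (r^T *m r) j k = r 0 j * r 0 k.
Proof. by rewrite mxE big_ord1 mxE. Qed.

Lemma psd_factor_aux k n (A : 'M[R]_n) : psdmx A ->
  (#|[set j | A j j != 0%R]| <= k)%N -> exists s, gram s = A.
Proof.
elim: k A => [|k IH] A pA.
  rewrite leqn0 cards_eq0 => /eqP H0.
  have d0 j : A j j = 0.
    apply/eqP; apply: contraT => nz.
    by have := in_set0 j; rewrite -H0 inE nz.
  exists [::]; rewrite /gram big_nil; apply/matrixP => j l; rewrite mxE.
  have := psd_cs (delta_mx 0 j) (delta_mx 0 l) pA.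
  rewrite !bil_delta !d0 mul0r => h.
  by apply/esym/eqP; rewrite -sqrf_eq0 eq_le h sqr_ge0.
move=> Hk.
have [H0|[i Hi]] := set_0Vmem [set j | A j j != 0].
  apply: (IH A pA); by rewrite H0 cards0.
have pd j : 0 <= A j j by rewrite -bil_delta; apply: pA.2.
rewrite inE in Hi.
set a := A i i in Hi.
have a_gt0 : 0 < a by rewrite lt_def Hi pd.
pose r := (Num.sqrt a)^-1 *: row i A.
have sa : Num.sqrt a ^+ 2 = a by rewrite sqr_sqrtr // ltW.
have san : Num.sqrt a != 0 by rewrite sqrtr_eq0 -ltNge.
have rE j : r 0 j = (Num.sqrt a)^-1 * A i j by rewrite !mxE.
pose A' := A - r^T *m r.
have A'E j l : A' j l = A j l - A i j * A i l / a.
  by rewrite !mxE big_ord1 !mxE -[in RHS]sa; field.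
have csij j : A i j ^+ 2 <= a * A j j.
  by have := psd_cs (delta_mx 0 i) (delta_mx 0 j) pA; rewrite !bil_delta.
have pA' : psdmx A'.
  split.
    by rewrite /A' linearB /= trmx_mul trmxK pA.1.
  move=> x; rewrite -/(bil x A' x) bilB bil_rank1.
  have -> : (x *m r^T) 0 0 = (Num.sqrt a)^-1 * bil x A (delta_mx 0 i).
    rewrite /r linearZ /= -scalemxAr mxE; congr (_ * _).
    by rewrite /bil tr_row pA.1 colE trmx_delta mulmxA.
  have cs := psd_cs x (delta_mx 0 i) pA; rewrite bil_delta -/a in cs.
  rewrite exprMn exprVn sa subr_ge0 mulrC ler_pdivrMr //.
have [s Hs] : exists s, gram s = A'.
  apply: (IH A' pA'); rewrite -ltnS; apply: leq_trans Hk.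
  apply: proper_card; apply/properP; split.
    apply/subsetP => j; rewrite !inE; apply: contraNN => /eqP Ajj.
    rewrite A'E Ajj.
    have : A i j ^+ 2 <= 0 by rewrite -(mulr0 a) -Ajj csij.
    have := sqr_ge0 (A i j) => h1 h2.
    have -> : A i j = 0 by apply/eqP; rewrite -sqrf_eq0 eq_le h2 h1.
    by rewrite mul0r mul0r subr0.
  exists i; rewrite inE // A'E -/a.
  apply/negPn; apply/eqP; field; by rewrite gt_eqF.
exists (r :: s); rewrite /gram big_cons -/(gram s) Hs /A'.
by rewrite addrC subrK.
Qed.

Lemma psd_factor n (A : 'M[R]_n) : psdmx A -> exists s, gram s = A.
Proof. by move=> pA; apply: psd_factor_aux pA (leqnn _). Qed.


Lemma bilZm n (x : 'rV[R]_n) (A : 'M[R]_n) c : bil x (c *: A) x = c * bil x A x.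
Proof. by rewrite /bil -scalemxAr -scalemxAl mxE. Qed.

Lemma dot_ge0 m (v : 'rV[R]_m) : 0 <= (v *m v^T) 0 0.
Proof. by rewrite mxE; apply: sumr_ge0 => j _; rewrite mxE -expr2 sqr_ge0. Qed.

Lemma coef_ex k n (Rm : 'M[R]_(k, n)) (q : 'rV[R]_n) c : 0 < c ->
  psdmx (c *: (Rm^T *m Rm) - q^T *m q) ->
  exists v : 'rV[R]_k, v *m Rm = q /\ (v *m v^T) 0 0 <= c.
Proof.
move=> c_gt0 [_ pA]; set G := Rm^T *m Rm in pA *.
have Hb x : 0 <= c * bil x G x - ((x *m q^T) 0 0) ^+ 2.
  by have := pA x; rewrite -/(bil _ _ _) bilB bilZm bil_rank1.
have qK : q *m cokermx G = 0.
  apply/matrixP => i j; rewrite (ord1 i) [RHS]mxE.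
  pose x := (col j (cokermx G))^T.
  have h0 : bil x G x = 0.
    rewrite /bil trmxK -mulmxA colE (mulmxA G) mulmx_coker mul0mx mulmx0.
    by rewrite mxE.
  have := Hb x; rewrite h0 mulr0 sub0r oppr_ge0 => h.
  have e : (x *m q^T) 0 0 = 0 by apply/eqP; rewrite -sqrf_eq0 eq_le h sqr_ge0.
  have key (M : 'M[R]_n) : (q *m M) 0 j = (q *m col j M) 0 0.
    by rewrite !mxE; apply: eq_bigr => l _; rewrite !mxE.
  by rewrite key -e dot_sym /x trmxK.
have qG : (q <= G)%MS by rewrite submxE qK.
pose w := q *m pinvmx G.
have wG : w *m G = q by rewrite /w mulmxKpV.
exists (w *m Rm^T); split; first by rewrite -mulmxA wG.
have tE : (w *m Rm^T *m (w *m Rm^T)^T) 0 0 = (q *m w^T) 0 0.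
  by rewrite trmx_mul trmxK !mulmxA -(mulmxA w) wG.
rewrite tE.
have t0 : 0 <= (q *m w^T) 0 0 by rewrite -tE dot_ge0.
have := Hb w; rewrite /bil wG dot_sym.
set t := (q *m w^T) 0 0 in t0 *; nra.
Qed.


Lemma bigmax_ge (I : eqType) (r : seq I) (F : I -> R) x :
  x \in r -> F x <= \big[Num.max/0]_(i <- r) F i.
Proof.
elim: r => [//|y r IH]; rewrite inE big_cons le_max => /orP[/eqP->|/IH ->].
  by rewrite lexx.
by rewrite orbT.
Qed.

Lemma bigmax_ge0 (I : Type) (r : seq I) (F : I -> R) :
  0 <= \big[Num.max/0]_(i <- r) F i.
Proof. by elim: r => [|y r IH]; rewrite ?big_nil ?big_cons ?lexx // le_max IH orbT. Qed.

Lemma bigmax_le (I : eqType) (r : seq I) (F : I -> R) c : 0 <= c ->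
  (forall i, i \in r -> F i <= c) -> \big[Num.max/0]_(i <- r) F i <= c.
Proof.
move=> c0; elim: r => [|y r IH] H; rewrite ?big_nil ?big_cons // ge_max.
rewrite H ?mem_head //= IH // => i ir; apply: H; by rewrite inE ir orbT.
Qed.

Lemma sqrt_le_sq (x b : R) : 0 <= x -> Num.sqrt x <= b -> x <= b ^+ 2.
Proof.
move=> x0 h; rewrite -(sqr_sqrtr x0); have s0 := sqrtr_ge0 x.
set s := Num.sqrt x in h s0 *; nra.
Qed.

Lemma bil_gram n m (x : 'rV[R]_n) (M : 'M[R]_(m, n)) :
  bil x (M^T *m M) x = ((x *m M^T) *m (x *m M^T)^T) 0 0.
Proof. by rewrite /bil trmx_mul trmxK !mulmxA. Qed.

Lemma psd1 n : psdmx (1%:M : 'M[R]_n).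
Proof. split; first by rewrite trmx1. by move=> x; rewrite mulmx1 dot_ge0. Qed.

Lemma cs_dot n (y l : 'rV[R]_n) :
  ((y *m l^T) 0 0) ^+ 2 <= (y *m y^T) 0 0 * (l *m l^T) 0 0.
Proof. by have := psd_cs y l (psd1 n); rewrite /bil !mulmx1. Qed.

Lemma gamma2_of_noX N m (Q : 'M[R]_(m, N)) g : 0 < g ->
  ~ (exists X : 'M[R]_N, psdmx X /\ \tr X <= g ^+ 2 * N%:R /\
      forall i, psd_ge X ((row i Q)^T *m row i Q)) ->
  gamma2_gt Q g.
Proof.
move=> g0 nX k L M LM; rewrite ltNge; apply/negP => H; apply: nX.
set a := norm2inf L in H; set b := norm12 M in H.
have a0 : 0 <= a by apply: bigmax_ge0.
have b0 : 0 <= b by apply: bigmax_ge0.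
have colb j : \sum_i M i j ^+ 2 <= b ^+ 2.
  apply: sqrt_le_sq; first by apply: sumr_ge0 => i _; apply: sqr_ge0.
  exact: (bigmax_ge (fun j => Num.sqrt (\sum_i M i j ^+ 2)) (mem_index_enum j)).
have rowa i : (row i L *m (row i L)^T) 0 0 <= a ^+ 2.
  rewrite mxE; under eq_bigr do rewrite !mxE -expr2.
  apply: sqrt_le_sq; first by apply: sumr_ge0 => j _; apply: sqr_ge0.
  exact: (bigmax_ge (fun i => Num.sqrt (\sum_j L i j ^+ 2)) (mem_index_enum i)).
exists (a ^+ 2 *: (M^T *m M)); split; last split.
- split; first by rewrite linearZ /= trmx_mul trmxK.
  move=> x; rewrite -/(bil _ _ _) bilZm bil_gram.
  by apply: mulr_ge0; [apply: sqr_ge0 | apply: dot_ge0].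
- rewrite mxtraceZ.
  have trE : \tr (M^T *m M) = \sum_j \sum_i M i j ^+ 2.
    rewrite /mxtrace; apply: eq_bigr => j _; rewrite mxE.
    by apply: eq_bigr => i _; rewrite mxE expr2.
  have : \tr (M^T *m M) <= N%:R * b ^+ 2.
    rewrite trE; apply: le_trans (ler_sum _ (fun j _ => colb j)) _.
    by rewrite sumr_const card_ord mulr_natl.
  have ab : a * b <= g by [].
  have tr0 : 0 <= \tr (M^T *m M).
    by rewrite trE; apply: sumr_ge0 => j _; apply: sumr_ge0 => i _; apply: sqr_ge0.
  have N0 : 0 <= N%:R :> R by apply: ler0n.
  have ab2 : (a * b) ^+ 2 <= g ^+ 2 by rewrite ler_sqr ?nnegrE ?mulr_ge0 // ltW.
  move=> h; apply: le_trans (ler_wpM2l (sqr_ge0 a) h) _.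
  rewrite mulrCA -exprMn mulrC; apply: ler_wpM2r => //.
- move=> i; rewrite -LM row_mul; set l := row i L.
  split.
    by rewrite linearB /= linearZ /= !trmx_mul !trmxK.
  move=> x; rewrite -/(bil _ _ _) bilB bilZm bil_gram bil_rank1.
  rewrite [(l *m M)^T]trmx_mul mulmxA.
  set y := x *m M^T.
  have := cs_dot y l; have := rowa i; rewrite -/l.
  have := dot_ge0 y; have := dot_ge0 l.
  set yl := (y *m l^T) 0 0; set yy := (y *m y^T) 0 0; set ll := (l *m l^T) 0 0.
  nra.
Qed.


Lemma psdZ n (X : 'M[R]_n) c : 0 <= c -> psdmx X -> psdmx (c *: X).
Proof.
move=> c0 [sX pX]; split; first by rewrite linearZ /= sX.
by move=> x; rewrite -/(bil _ _ _) bilZm mulr_ge0 //; apply: pX.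
Qed.

Lemma gram_cat n (s1 s2 : seq 'rV[R]_n) : gram (s1 ++ s2) = gram s1 + gram s2.
Proof. by rewrite /gram big_cat. Qed.

Lemma gram_rows n (s : seq 'rV[R]_n) : (mx_of_rows s)^T *m mx_of_rows s = gram s.
Proof.
apply/matrixP => j l; rewrite /gram summxE mxE (big_nth 0) big_mkord.
by apply: eq_bigr => i _; rewrite rank1E !mxE.
Qed.

Lemma frob_rows n (s : seq 'rV[R]_n) :
  frob (mx_of_rows s) = Num.sqrt (\tr (gram s)).
Proof.
rewrite -gram_rows /frob /mxtrace exchange_big; congr Num.sqrt.
by apply: eq_bigr => j _; rewrite mxE; apply: eq_bigr => i _; rewrite [in RHS]mxE expr2.
Qed.

Lemma row_rows n (s : seq 'rV[R]_n) i : row i (mx_of_rows s) = nth 0 s i.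
Proof. by apply/rowP => j; rewrite !mxE. Qed.

Lemma psd_run_aux_rcons n step (done rest : seq 'rV[R]_n) q st :
  psd_run_aux step done (rcons rest q) st =
  match psd_run_aux step done rest st with
  | Some _ => step (rcons (done ++ rest) q) | None => None end.
Proof.
elim: rest done st => [|a rest IH] done st /=; first by rewrite cats0.
by rewrite IH cat_rcons.
Qed.

Lemma psd_run_rcons n (A : psd_alg R n) p q :
  psd_run A (rcons p q) =
  match psd_run A p with Some _ => A.2 (rcons p q) | None => None end.
Proof. by rewrite /psd_run psd_run_aux_rcons. Qed.

Lemma fact_run_aux_rcons n step (done rest : seq 'rV[R]_n) q st :
  fact_run_aux step done (rcons rest q) st =
  match fact_run_aux step done rest st with
  | Some (Rs, Ls) => match step (rcons (done ++ rest) q) with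
                     | Some (nw, l) => Some (Rs ++ nw, rcons Ls l)
                     | None => None end
  | None => None end.
Proof.
elim: rest done st => [|a rest IH] done st /=; first by rewrite cats0.
by rewrite IH cat_rcons.
Qed.

Lemma fact_run_rcons n (F : fact_alg R n) p q :
  fact_run F (rcons p q) =
  match fact_run F p with
  | Some (Rs, Ls) => match F.2 (rcons p q) with
                     | Some (nw, l) => Some (Rs ++ nw, rcons Ls l)
                     | None => None end
  | None => None end.
Proof. by rewrite /fact_run fact_run_aux_rcons. Qed.

Lemma factor_ex n (Y : 'M[R]_n) : exists s, psdmx Y -> gram s = Y.
Proof.
case: (Classical_Prop.classic (psdmx Y)) => h.
  by have [s hs] := psd_factor h; exists s.
by exists [::].
Qed.
Definition factor n (Y : 'M[R]_n) :=
  proj1_sig (IndefiniteDescription.constructive_indefinite_description _ (factor_ex Y)).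
Lemma factorP n (Y : 'M[R]_n) : psdmx Y -> gram (factor Y) = Y.
Proof. exact: (proj2_sig (IndefiniteDescription.constructive_indefinite_description _ (factor_ex Y))). Qed.

Lemma coef_ex' k n (Rm : 'M[R]_(k, n)) (q : 'rV[R]_n) c :
  exists v : 'rV[R]_k, 0 < c -> psdmx (c *: (Rm^T *m Rm) - q^T *m q) ->
    v *m Rm = q /\ (v *m v^T) 0 0 <= c.
Proof.
case: (Classical_Prop.classic (0 < c /\ psdmx (c *: (Rm^T *m Rm) - q^T *m q))).
  by move=> [h1 h2]; have [v hv] := coef_ex h1 h2; exists v.
by move=> h; exists 0 => h1 h2; case: h.
Qed.
Definition coefv k n (Rm : 'M[R]_(k, n)) q c :=
  proj1_sig (IndefiniteDescription.constructive_indefinite_description _ (coef_ex' Rm q c)).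

Definition lof n (Rt : seq 'rV[R]_n) q c : seq R :=
  let v := coefv (mx_of_rows Rt) q c in [seq v 0 i | i <- enum 'I_(size Rt)].

Lemma lof_spec n (Rt : seq 'rV[R]_n) q c : 0 < c ->
  psdmx (c *: gram Rt - q^T *m q) ->
  [/\ size (lof Rt q c) = size Rt,
      (\row_(i < size Rt) nth 0 (lof Rt q c) i) *m mx_of_rows Rt = q &
      seqnorm (lof Rt q c) <= Num.sqrt c].
Proof.
move=> c0 pq; rewrite -gram_rows in pq.
have [vR vn] := proj2_sig (IndefiniteDescription.constructive_indefinite_description _ (coef_ex' (mx_of_rows Rt) q c)) c0 pq.
rewrite /lof /coefv.
set v := proj1_sig _ in vR vn *.
have rv : \row_(i < size Rt) nth 0 (lof Rt q c) i = v.
  apply/rowP => i; rewrite mxE (nth_map i) ?size_enum_ord //.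
  by rewrite nth_ord_enum.
split; first by rewrite size_map size_enum_ord.
  by rewrite rv.
rewrite /seqnorm ler_sqrt ?(ltW c0) //.
rewrite big_map big_enum /=; apply: le_trans vn; rewrite mxE.
rewrite le_eqVlt; apply/orP; left; apply/eqP; apply: eq_big => // i _; by rewrite mxE expr2.
Qed.

Section Construction.
Variables (N : nat) (A : psd_alg R N) (S : R).

Definition nwf (p : seq 'rV[R]_N) q : seq 'rV[R]_N :=
  match psd_run A p, A.2 (rcons p q) with
  | Some Xp, Some Xt => factor (S^-1 *: (Xt - Xp))
  | _, _ => [::] end.

Fixpoint RsofRev (rp : seq 'rV[R]_N) : seq 'rV[R]_N :=
  match rp with
  | [::] => factor (S^-1 *: A.1)
  | q :: rp' => RsofRev rp' ++ nwf (rev rp') q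
  end.
Definition Rsof p := RsofRev (rev p).

Lemma Rsof_rcons p q : Rsof (rcons p q) = Rsof p ++ nwf p q.
Proof. by rewrite /Rsof rev_rcons /= revK. Qed.

Definition stepF p q : option (seq 'rV[R]_N * seq R) :=
  match A.2 (rcons p q) with
  | None => None
  | Some _ => Some (nwf p q, lof (Rsof p ++ nwf p q) q S)
  end.

Definition theF : fact_alg R N :=
  (Rsof [::], fun p' => match rev p' with [::] => None | q :: rp => stepF (rev rp) q end).

Lemma theF2 p q : theF.2 (rcons p q) = stepF p q.
Proof. by rewrite /= rev_rcons revK. Qed.

End Construction.


Lemma gram_step N (A : psd_alg R N) S p q Xp Xt : 0 < S ->
  psd_run A p = Some Xp -> A.2 (rcons p q) = Some Xt -> psd_ge Xt Xp ->
  gram (Rsof A S p) = S^-1 *: Xp -> gram (Rsof A S (rcons p q)) = S^-1 *: Xt.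
Proof.
move=> S0 hp hq ge hg; rewrite Rsof_rcons gram_cat hg /nwf hp hq factorP.
  by rewrite -scalerDr addrC subrK.
by apply: psdZ ge; rewrite invr_ge0 ltW.
Qed.

Lemma psd_scaleK N (S : R) (Xt B : 'M[R]_N) : 0 < S ->
  S *: (S^-1 *: Xt) - B = Xt - B.
Proof. by move=> S0; rewrite scalerA mulfV ?gt_eqF // scale1r. Qed.

Lemma theF_inv N gamma C (A : psd_alg R N) : 0 < C * gamma ->
  psd_alg_correct gamma C A ->
  forall p Rs Ls, fact_run (theF A ((C * gamma) ^+ 2)) p = Some (Rs, Ls) ->
  [/\ Rs = Rsof A ((C * gamma) ^+ 2) p,
      (forall l, l \in Ls -> seqnorm l <= C * gamma) &
      exists Xp, psd_run A p = Some Xp /\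
        gram (Rsof A ((C * gamma) ^+ 2) p) = ((C * gamma) ^+ 2)^-1 *: Xp].
Proof.
move=> s0 [pA0 pAc]; set S := (C * gamma) ^+ 2.
have S0 : 0 < S by rewrite exprn_gt0.
have sS : Num.sqrt S = C * gamma by rewrite sqrtr_sqr gtr0_norm.
elim/last_ind => [|p q IH] Rs Ls.
  rewrite /fact_run /= => -[<- <-]; split => //.
  exists A.1; split => //; rewrite /Rsof /= factorP //.
  by apply: psdZ pA0; rewrite invr_ge0 ltW.
rewrite fact_run_rcons; case Hp: (fact_run _ p) => [[Rs0 Ls0]|] //.
have [eR HL [Xp [HXp Hg]]] := IH _ _ Hp.
rewrite theF2 /stepF; have := pAc p q Xp HXp.
case HA: (A.2 (rcons p q)) => [Xt|] //= [pXt [geP [geQ trB]]] [<- <-].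
have Hg' := gram_step S0 HXp HA geP Hg.
split.
- by rewrite eR Rsof_rcons.
- move=> l; rewrite mem_rcons inE => /orP[/eqP->|/HL //].
  rewrite -Rsof_rcons -sS.
  have key : psdmx (S *: gram (Rsof A S (rcons p q)) - q^T *m q).
    by rewrite Hg' psd_scaleK.
  by have [_ _ ->] := lof_spec S0 key.
- by exists Xt; rewrite psd_run_rcons HXp HA.
Qed.

End Alg.

Theorem lemma4p2 (R : rcfType) (N : nat) (gamma C : R) :
  0 < gamma -> 1 <= C ->
  (exists A : psd_alg R N, psd_alg_correct gamma C A) ->
  exists F : fact_alg R N, solves_online_avg_fact gamma C F.
Proof.
move=> g0 C1 [A hA].
have s0 : 0 < C * gamma by rewrite mulr_gt0 // (lt_le_trans ltr01 C1).
set S := (C * gamma) ^+ 2.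
have S0 : 0 < S by rewrite exprn_gt0.
have sS : Num.sqrt S = C * gamma by rewrite sqrtr_sqr gtr0_norm.
exists (theF A S) => p q Rs Ls H.
have [eR HL [Xp [HXp Hg]]] := theF_inv s0 hA H.
rewrite theF2 /stepF; have := hA.2 p q Xp HXp.
case HA: (A.2 (rcons p q)) => [Xt|] /=.
  move=> [pXt [geP [geQ trB]]].
  have Hg' := gram_step S0 HXp HA geP Hg.
  rewrite eR -Rsof_rcons.
  have key : psdmx (S *: gram (Rsof A S (rcons p q)) - q^T *m q).
    by rewrite Hg' psd_scaleK.
  have [h1 h2 h3] := lof_spec S0 key.
  split => //; split => //; split.
  - rewrite frob_rows Hg' mxtraceZ ler_sqrt ?ler0n //.
    rewrite ler_pdivrMl // mulrC; apply: le_trans trB _.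
    by rewrite /S exprMn mulrC.
  - apply: bigmax_le; first exact: ltW.
    move=> l; rewrite mem_rcons inE => /orP[/eqP->|/HL //].
    by rewrite -sS.
move=> Hno; apply: gamma2_of_noX => // -[X [pX [trX Hi]]]; apply: Hno.
exists X; split => //; split => // qi qin.
have hi : (index qi (rcons p q) < size (rcons p q))%N by rewrite index_mem.
by have := Hi (Ordinal hi); rewrite row_rows /= nth_index.
Qed.
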